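(* Under the assumptions below, let $y_\varrho\in Y$ be the solution of the continuous problem and $y_{\varrho h}\in Y_h$ the unique solution of the Galerkin problem, with the choice $\varrho=h^{2\alpha}$. Then there is a constant $c>0$ independent of $h$ and $\overline{y}$ such that $$\|y_\varrho-y_{\varrho h}\|_{H_Y}^2+h^{2\alpha}\|y_\varrho-y_{\varrho h}\|_D^2\le c\begin{cases}\|\overline{y}\|_{H_Y}^2&\text{for }\overline{y}\in H_Y,\\ h^{2\alpha}\|\overline{y}\|_D^2&\text{for }\overline{y}\in Y,\\ h^{4\alpha}\|D\overline{y}\|_{H_Y}^2&\text{for }\overline{y}\in Y,\ D\overline{y}\in H_Y.\end{cases}$$
   Context: Abstract setting: Let $Y\subset H_Y\subset Y^*$ be a Gelfand triple of real Hilbert spaces, with duality pairing $\langle\cdot,\cdot\rangle_{Y^*,Y}$ extending the inner product of $H_Y$. Let $D:Y\to Y^*$ be bounded, linear, self-adjoint and elliptic, $\|y\|_D:=\langle Dy,y\rangle_{Y^*,Y}^{1/2}$ (an equivalent norm on $Y$). For $y\in Y$ we write ''$Dy\in H_Y$'' if there is $w\in H_Y$ with $\langle Dy,v\rangle_{Y^*,Y}=\langle w,v\rangle_{H_Y}$ for all $v\in Y$, and then $\|Dy\|_{H_Y}:=\|w\|_{H_Y}$. Given $\overline{y}\in H_Y$ and $\varrho>0$, $y_\varrho\in Y$ is the unique solution of $\langle y_\varrho,y\rangle_{H_Y}+\varrho\langle Dy_\varrho,y\rangle_{Y^*,Y}=\langle\overline{y},y\rangle_{H_Y}$ for all $y\in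 Y$. Discretization: For each discretization parameter $h\in(0,h_0]$ let $Y_h\subset Y$ be a finite-dimensional subspace, and assume there are maps $P_h:Y\to Y_h$, an exponent $\alpha>0$ and constants $c_1,c_2,c_3,c_4>0$ independent of $h$ such that for all $y\in Y$: $\|y-P_hy\|_{H_Y}\le c_1h^\alpha\|y\|_D$ and $\|y-P_hy\|_D\le c_2\|y\|_D$; and, if in addition $Dy\in H_Y$: $\|y-P_hy\|_{H_Y}\le c_3h^{2\alpha}\|Dy\|_{H_Y}$ and $\|y-P_hy\|_D\le c_4h^\alpha\|Dy\|_{H_Y}$. The Galerkin solution $y_{\varrho h}\in Y_h$ satisfies $\langle y_{\varrho h},y_h\rangle_{H_Y}+\varrho\langle Dy_{\varrho h},y_h\rangle_{Y^*,Y}=\langle\overline{y},y_h\rangle_{H_Y}$ for all $y_h\in Y_h$. *)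

(* Defs.v *)
From mathcomp Require Import all_boot all_order all_algebra.
From mathcomp Require Import reals exp.
Set Implicit Arguments. Unset Strict Implicit. Unset Printing Implicit Defensive.
Import Order.TTheory GRing.Theory Num.Theory.
Local Open Scope ring_scope.

Section Defs.
Variables (R : realType) (H : lmodType R).

Definition nrm (b : H -> H -> R) (x : H) : R := Num.sqrt (b x x).

Definition subspace (S : H -> Prop) : Prop :=
  S 0 /\ forall (a : R) x y, S x -> S y -> S (a *: x + y).

Definition sym_bilinear_on (S : H -> Prop) (b : H -> H -> R) : Prop :=
  (forall x y, S x -> S y -> b x y = b y x) /\
  (forall (a : R) x y z, S x -> S y -> S z -> b (a *: x + y) z = a * b x z + b y z).

Definition inner_product_on (S : H -> Prop) (b : H -> H -> R) : Prop :=
  sym_bilinear_on S b /\ forall x, S x -> x != 0 -> 0 < b x x.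

Definition complete_in (S : H -> Prop) (n : H -> R) : Prop :=
  forall u : nat -> H, (forall k, S (u k)) ->
    (forall e, 0 < e -> exists N, forall m k, (N <= m)%N -> (N <= k)%N -> n (u m - u k) < e) ->
    exists l, S l /\ forall e, 0 < e -> exists N, forall k, (N <= k)%N -> n (u k - l) < e.

(* Gelfand triple Y ⊂ H_Y ⊂ Y^*: H_Y = (H, ipH) real Hilbert space,
   Y = (Y, ipY) real Hilbert space, continuously and densely embedded in H_Y. *)
Definition gelfand_triple (ipH : H -> H -> R) (Y : H -> Prop) (ipY : H -> H -> R) : Prop :=
  [/\ inner_product_on (fun _ => True) ipH,
      complete_in (fun _ => True) (nrm ipH),
      subspace Y, inner_product_on Y ipY & complete_in Y (nrm ipY)] /\
  (exists C, 0 < C /\ forall y, Y y -> nrm ipH y <= C * nrm ipY y) /\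
  (forall x e, 0 < e -> exists y, Y y /\ nrm ipH (x - y) < e).

(* D : Y -> Y^* bounded, linear, self-adjoint, elliptic, given through
   dD y v = <D y, v>_{Y^*,Y} *)
Definition elliptic_operator (Y : H -> Prop) (ipY : H -> H -> R) (dD : H -> H -> R) : Prop :=
  [/\ sym_bilinear_on Y dD,
      (exists M, 0 < M /\ forall y v, Y y -> Y v -> `|dD y v| <= M * nrm ipY y * nrm ipY v) &
      (exists m, 0 < m /\ forall y, Y y -> m * nrm ipY y ^+ 2 <= dD y y)].

(* "D y ∈ H_Y", with representative w: <D y, v> = (w, v)_{H_Y} for all v in Y;
   then ||D y||_{H_Y} = nrm ipH w *)
Definition DinH (ipH : H -> H -> R) (Y : H -> Prop) (dD : H -> H -> R) (y w : H) : Prop :=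
  forall v, Y v -> dD y v = ipH w v.

Definition fin_dim_subspace (S : H -> Prop) : Prop :=
  exists (n : nat) (b : 'I_n -> H),
    forall x, S x <-> exists c : 'I_n -> R, x = \sum_(i < n) c i *: b i.

(* continuous problem: y_rho in Y solves (y_rho,y)_H + rho <D y_rho, y> = (ybar, y)_H for all y in Y;
   the Galerkin problem is the same with Y replaced by Y_h *)
Definition solves (ipH : H -> H -> R) (S : H -> Prop) (dD : H -> H -> R)
    (rho : R) (ybar yr : H) : Prop :=
  S yr /\ forall v, S v -> ipH yr v + rho * dD yr v = ipH ybar v.

End Defs.

(* Main.v *)
Require Import Defs.
From mathcomp Require Import all_boot all_order all_algebra.
From mathcomp Require Import reals exp.
From mathcomp Require Import lra ring.
Import Order.TTheory GRing.Theory Num.Theory.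
Local Open Scope ring_scope.


Section Gen.
Variables (R : realType) (H : lmodType R) (S : H -> Prop) (b : H -> H -> R).
Hypotheses (hS : subspace S) (hb : sym_bilinear_on S b).

Lemma S0 : S 0. Proof. by case: hS. Qed.
Lemma SD x y : S x -> S y -> S (x + y).
Proof. by move=> ? ?; rewrite -[x]scale1r; case: hS => _; apply. Qed.
Lemma SZ a x : S x -> S (a *: x).
Proof. by move=> ?; rewrite -[_ *: _]addr0; case: hS => _; apply => //; apply: S0. Qed.
Lemma SB x y : S x -> S y -> S (x - y).
Proof. move=> ? ?; apply: SD => //; rewrite -scaleN1r; exact: SZ. Qed.

Lemma b0 z : S z -> b 0 z = 0.
Proof.
move=> Sz; case: hb => _ L; have := L 1 0 0 z S0 S0 Sz.
rewrite scale1r addr0 mul1r; lra.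
Qed.
Lemma bD x y z : S x -> S y -> S z -> b (x + y) z = b x z + b y z.
Proof. move=> ? ? ?; case: hb => _ L; by rewrite -[x in LHS]scale1r L // mul1r. Qed.
Lemma bZ a x z : S x -> S z -> b (a *: x) z = a * b x z.
Proof.
move=> ? ?; case: hb => _ L; rewrite -[_ *: _]addr0 L //; last exact: S0.
by rewrite b0 // addr0.
Qed.
Lemma bB x y z : S x -> S y -> S z -> b (x - y) z = b x z - b y z.
Proof.
move=> ? ? ?; rewrite bD //; last by rewrite -scaleN1r; exact: SZ.
by rewrite -scaleN1r bZ // mulN1r.
Qed.
Lemma bsym x y : S x -> S y -> b x y = b y x.
Proof. by case: hb => Sy _; exact: Sy. Qed.
Lemma bDr x y z : S x -> S y -> S z -> b z (x + y) = b z x + b z y.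
Proof. by move=> ? ? ?; rewrite bsym ?bD ?(bsym z) //; apply: SD. Qed.
Lemma bBr x y z : S x -> S y -> S z -> b z (x - y) = b z x - b z y.
Proof. by move=> ? ? ?; rewrite bsym ?bB ?(bsym z) //; apply: SB. Qed.
Lemma bZr a x z : S x -> S z -> b z (a *: x) = a * b z x.
Proof. by move=> ? ?; rewrite bsym ?bZ ?(bsym z) //; apply: SZ. Qed.
Lemma bDD x y : S x -> S y -> b (x + y) (x + y) = b x x + 2 * b x y + b y y.
Proof.
move=> ? ?; rewrite bD ?bDr //; try exact: SD.
rewrite (bsym y x) //; lra.
Qed.
Lemma bBB x y : S x -> S y -> b (x - y) (x - y) = b x x - 2 * b x y + b y y.
Proof.
move=> ? ?; rewrite bB ?bBr //; try exact: SB.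
rewrite (bsym y x) //; lra.
Qed.
End Gen.

Arguments S0 {R H S} _.
Arguments SD {R H S} _ _ _.
Arguments SZ {R H S} _ _ _.
Arguments SB {R H S} _ _ _.
Arguments b0 {R H S b} _ _ _.
Arguments bD {R H S b} _ _ _ _ _.
Arguments bZ {R H S b} _ _ _ _ _.
Arguments bB {R H S b} _ _ _ _ _.
Arguments bsym {R H S b} _ _ _.
Arguments bDr {R H S b} _ _ _ _ _.
Arguments bBr {R H S b} _ _ _ _ _.
Arguments bZr {R H S b} _ _ _ _ _.
Arguments bDD {R H S b} _ _ _ _.
Arguments bBB {R H S b} _ _ _ _.

Lemma subT (R : realType) (H : lmodType R) : subspace (fun _ : H => True).
Proof. by []. Qed.

Lemma fin_sub (R : realType) (H : lmodType R) (S : H -> Prop) x y :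
  fin_dim_subspace S -> S x -> S y -> S (x - y).
Proof.
move=> [n [bb E]] /E [cx ->] /E [cy ->]; apply/E.
exists (fun i => cx i - cy i); rewrite -sumrB; apply: eq_bigr => i _.
by rewrite scalerBl.
Qed.

Lemma sq_le (R : realType) (x y K : R) : 0 <= x -> 0 <= y -> 0 <= K ->
  Num.sqrt x <= K * Num.sqrt y -> x <= K ^+ 2 * y.
Proof.
move=> x0 y0 K0 le.
rewrite -[x]sqr_sqrtr // -[y in _ * y]sqr_sqrtr // -exprMn !expr2.
have := sqrtr_ge0 x; nra.
Qed.
Arguments fin_sub {R H S x y} _ _ _.
Arguments sq_le {R x y K} _ _ _ _.

Theorem mainTheorem3 (R : realType) (H : lmodType R) (ipH : H -> H -> R)
    (Y : H -> Prop) (ipY : H -> H -> R) (dD : H -> H -> R)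
    (h0 alpha c1 c2 c3 c4 : R) (Yh : R -> H -> Prop) (P : R -> H -> H) :
  gelfand_triple ipH Y ipY ->
  elliptic_operator Y ipY dD ->
  0 < h0 -> 0 < alpha -> 0 < c1 -> 0 < c2 -> 0 < c3 -> 0 < c4 ->
  (forall h, 0 < h <= h0 -> fin_dim_subspace (Yh h) /\ (forall x, Yh h x -> Y x)) ->
  (forall h, 0 < h <= h0 -> forall y, Y y ->
     [/\ Yh h (P h y),
         nrm ipH (y - P h y) <= c1 * h `^ alpha * nrm dD y &
         nrm dD (y - P h y) <= c2 * nrm dD y]) ->
  (forall h, 0 < h <= h0 -> forall y w, Y y -> DinH ipH Y dD y w ->
     nrm ipH (y - P h y) <= c3 * h `^ (2 * alpha) * nrm ipH w /\
     nrm dD (y - P h y) <= c4 * h `^ alpha * nrm ipH w) ->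
  exists c : R, 0 < c /\
    forall (h : R) (ybar yr yrh : H), 0 < h <= h0 ->
      solves ipH Y dD (h `^ (2 * alpha)) ybar yr ->
      solves ipH (Yh h) dD (h `^ (2 * alpha)) ybar yrh ->
      [/\ nrm ipH (yr - yrh) ^+ 2 + h `^ (2 * alpha) * nrm dD (yr - yrh) ^+ 2
            <= c * nrm ipH ybar ^+ 2,
          Y ybar ->
          nrm ipH (yr - yrh) ^+ 2 + h `^ (2 * alpha) * nrm dD (yr - yrh) ^+ 2
            <= c * h `^ (2 * alpha) * nrm dD ybar ^+ 2 &
          forall w, Y ybar -> DinH ipH Y dD ybar w ->
          nrm ipH (yr - yrh) ^+ 2 + h `^ (2 * alpha) * nrm dD (yr - yrh) ^+ 2
            <= c * h `^ (4 * alpha) * nrm ipH w ^+ 2].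
Proof.
move=> [[[[ipS ipL] ippos] _ SY _ _] _] [dDb _ [m [m0 mell]]] h0p al0 c1p c2p c3p c4p
  hYh hP1 hP2.
have ipb : sym_bilinear_on (fun _ : H => True) ipH by [].
have ipT := @subT R H.
have ip0 : forall x, 0 <= ipH x x.
  move=> x; have [->|nz] := eqVneq x 0; last exact/ltW/ippos.
  by rewrite (b0 ipT ipb).
have dD0 : forall y, Y y -> 0 <= dD y y.
  move=> y Yy; apply: le_trans (mell y Yy); apply: mulr_ge0; first exact: ltW.
  exact: sqr_ge0.
have nip : forall x, nrm ipH x ^+ 2 = ipH x x by move=> x; rewrite /nrm sqr_sqrtr.
have ndD : forall x, Y x -> nrm dD x ^+ 2 = dD x x by move=> x Yx; rewrite /nrm sqr_sqrtr // dD0.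
set C := 1 + c1 ^+ 2 + c2 ^+ 2 + c3 ^+ 2 + c4 ^+ 2.
have C1 : 1 <= C.
  rewrite /C; have := sqr_ge0 c1; have := sqr_ge0 c2; have := sqr_ge0 c3;
  have := sqr_ge0 c4; lra.
exists C; split; first lra.
move=> h ybar yr yrh hh [Yyr eqr] [Yhyrh eqrh].
have [hp hle] := andP hh.
have [fdY YhY] := hYh h hh.
set rho := h `^ (2 * alpha).
set ha := h `^ alpha.
have ha0 : 0 < ha by apply: powR_gt0.
have rhoE : rho = ha ^+ 2.
  rewrite /rho /ha (_ : 2 * alpha = alpha + alpha); last lra.
  by rewrite powRD ?expr2 // (lt0r_neq0 hp) implybT.
have rho0 : 0 < rho by rewrite rhoE exprn_gt0.
have rho2 : h `^ (4 * alpha) = rho ^+ 2.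
  rewrite /rho (_ : 4 * alpha = 2 * alpha + 2 * alpha); last lra.
  by rewrite powRD ?expr2 // (lt0r_neq0 hp) implybT.
have Yyrh : Y yrh by apply: YhY.
set e := yr - yrh.
have Ye : Y e by apply: SB.
have go : forall v, Yh h v -> ipH e v + rho * dD e v = 0.
  move=> v Yhv; have Yv := YhY v Yhv.
  rewrite /e (bB ipT ipb) // (bB SY dDb) //.
  have := eqr v Yv; have := eqrh v Yhv; rewrite -/rho mulrBr; lra.
(* Cea *)
have cea : forall vh, Y vh -> Yh h (yrh - vh) ->
    ipH e e + rho * dD e e <= ipH (yr - vh) (yr - vh) + rho * dD (yr - vh) (yr - vh).
  move=> vh Yvh Yhw.
  have -> : yr - vh = e + (yrh - vh) by rewrite /e addrA subrK.
  have Yw : Y (yrh - vh) by apply: SB.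
  rewrite (bDD ipT ipb) // (bDD SY dDb) //.
  have := go _ Yhw; have := ip0 (yrh - vh); have := dD0 _ Yw.
  have := mulr_ge0 (ltW rho0) (dD0 _ Yw).
  rewrite !mulrDr; lra.
rewrite nip ndD //.
split.
-
  have := cea 0 (S0 SY); rewrite !subr0 => /(_ Yhyrh) c0.
  have A : ipH yr yr + rho * dD yr yr = ipH ybar yr by apply: eqr.
  have := ip0 (ybar - yr); rewrite (bBB ipT ipb) // => q.
  have := mulr_ge0 (ltW rho0) (dD0 _ Yyr); have := ip0 ybar.
  rewrite nip => q2 q3.
  have : ipH e e + rho * dD e e <= ipH ybar ybar by lra.
  move=> q4; apply: (le_trans q4); rewrite -[X in X <= _]mul1r.
  by apply: ler_wpM2r.
-
  move=> Yyb; rewrite ndD //.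
  have [Pin P1 P2] := hP1 h hh yr Yyr.
  have := cea (P h yr) (YhY _ Pin) (fin_sub fdY Yhyrh Pin) => c0.
  have Yd : Y (yr - P h yr) by apply: SB => //; apply: YhY.
  have s1 := sq_le (ip0 _) (dD0 _ Yyr) (ltW (mulr_gt0 c1p ha0)) P1.
  have s2 := sq_le (dD0 _ Yd) (dD0 _ Yyr) (ltW c2p) P2.
  set z := yr - ybar.
  have Yz : Y z by apply: SB.
  have ez : ipH z z + rho * dD yr z = 0.
    have := eqr z Yz; rewrite -/rho /z (bB ipT ipb) //; lra.
  have dz : dD yr z <= 0.
    have := ip0 z; have : rho * dD yr z <= 0 by have := ip0 z; lra.
    by rewrite pmulr_rle0.
  have := dD0 _ Yz; rewrite /z (bBB SY dDb) // => q1.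
  move: dz; rewrite /z (bBr SY dDb) // => dz.
  have Dle : dD yr yr <= dD ybar ybar by lra.
  rewrite exprMn -rhoE in s1.
  have E1 : ipH (yr - P h yr) (yr - P h yr) <= c1 ^+ 2 * rho * dD ybar ybar.
    apply: (le_trans s1); apply: ler_wpM2l => //.
    by apply: mulr_ge0; [exact: sqr_ge0 | exact: ltW].
  have E2 : dD (yr - P h yr) (yr - P h yr) <= c2 ^+ 2 * dD ybar ybar.
    apply: (le_trans s2); apply: ler_wpM2l => //; exact: sqr_ge0.
  apply: (le_trans c0).
  have Db0 := dD0 _ Yyb.
  have F2 : rho * dD (yr - P h yr) (yr - P h yr) <= rho * (c2 ^+ 2 * dD ybar ybar).
    by apply: ler_wpM2l => //; exact: ltW.
  set X := rho * dD ybar ybar.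
  have X0 : 0 <= X by apply: mulr_ge0 => //; exact: ltW.
  have E1' : ipH (yr - P h yr) (yr - P h yr) <= c1 ^+ 2 * X by rewrite /X mulrA.
  have F2' : rho * dD (yr - P h yr) (yr - P h yr) <= c2 ^+ 2 * X by rewrite /X mulrCA.
  have G3 : 0 <= c3 ^+ 2 * X by apply: mulr_ge0 => //; exact: sqr_ge0.
  have G4 : 0 <= c4 ^+ 2 * X by apply: mulr_ge0 => //; exact: sqr_ge0.
  rewrite -mulrA -/X /C !mulrDl mul1r; lra.
-
  move=> w Yyb Dw.
  set z := ybar - yr.
  have Yz : Y z by apply: SB.
  set wr := rho^-1 *: z.
  have Dr : DinH ipH Y dD yr wr.
    move=> v Yv; rewrite /wr (bZ ipT ipb) // /z (bB ipT ipb) //.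
    have := eqr v Yv; rewrite -/rho => q.
    have -> : ipH ybar v - ipH yr v = rho * dD yr v by lra.
    by rewrite mulrA mulVf ?gt_eqF // mul1r.
  have [Pin _ _] := hP1 h hh yr Yyr.
  have [P1 P2] := hP2 h hh yr wr Yyr Dr.
  have := cea (P h yr) (YhY _ Pin) (fin_sub fdY Yhyrh Pin) => c0.
  have Yd : Y (yr - P h yr) by apply: SB => //; apply: YhY.
  have s1 := sq_le (ip0 _) (ip0 wr) (ltW (mulr_gt0 c3p rho0)) P1.
  have s2 := sq_le (dD0 _ Yd) (ip0 wr) (ltW (mulr_gt0 c4p ha0)) P2.
  rewrite !exprMn -rhoE in s1 s2.
  have ez : rho * dD yr z = ipH z z.
    have := eqr z Yz; rewrite -/rho /z (bB ipT ipb) //; lra.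
  have dyz : dD yr z = ipH w z - dD z z.
    have -> : yr = ybar - z by rewrite /z opprB addrC subrK.
    by rewrite (bB SY dDb) // Dw.
  rewrite dyz in ez.
  have zz1 : ipH z z <= rho * ipH w z.
    have := mulr_ge0 (ltW rho0) (dD0 _ Yz); move: ez; rewrite mulrBr; lra.
  have := ip0 (rho *: w - z).
  rewrite (bBB ipT ipb) // (bZ ipT ipb) // (bZr ipT ipb) // (bZ ipT ipb) // => q.
  have zz : ipH z z <= rho ^+ 2 * ipH w w.
    move: q; rewrite expr2 -!mulrA; lra.
  have W : ipH wr wr <= ipH w w.
    rewrite /wr (bZ ipT ipb) // (bZr ipT ipb) // mulrA.
    rewrite -(ler_pM2l (exprn_gt0 2 rho0)) mulrA -expr2.
    rewrite -exprMn mulrV ?unitfE ?gt_eqF // expr1n mul1r //.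
  have w0 := ip0 w; have wr0 := ip0 wr.
  have E1 : ipH (yr - P h yr) (yr - P h yr) <= c3 ^+ 2 * rho ^+ 2 * ipH w w.
    apply: (le_trans s1); apply: ler_wpM2l => //.
    apply: mulr_ge0; exact: sqr_ge0.
  have E2 : rho * dD (yr - P h yr) (yr - P h yr) <= c4 ^+ 2 * rho ^+ 2 * ipH w w.
    have : dD (yr - P h yr) (yr - P h yr) <= c4 ^+ 2 * rho * ipH w w.
      apply: (le_trans s2); apply: ler_wpM2l => //.
      by apply: mulr_ge0; [exact: sqr_ge0 | exact: ltW].
    move=> q2; have := ler_wpM2l (ltW rho0) q2.
    suff -> : c4 ^+ 2 * rho ^+ 2 * ipH w w = rho * (c4 ^+ 2 * rho * ipH w w) by [].
    by rewrite expr2; ring.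
  apply: (le_trans c0); rewrite rho2 nip.
  set X := rho ^+ 2 * ipH w w.
  have X0 : 0 <= X by apply: mulr_ge0 => //; exact: sqr_ge0.
  have E1' : ipH (yr - P h yr) (yr - P h yr) <= c3 ^+ 2 * X by rewrite /X mulrA.
  have E2' : rho * dD (yr - P h yr) (yr - P h yr) <= c4 ^+ 2 * X by rewrite /X mulrA.
  have G1 : 0 <= c1 ^+ 2 * X by apply: mulr_ge0 => //; exact: sqr_ge0.
  have G2 : 0 <= c2 ^+ 2 * X by apply: mulr_ge0 => //; exact: sqr_ge0.
  rewrite -mulrA -/X /C !mulrDl mul1r; lra.
Qed.
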